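(* Let $n\ge 4$, $N=\{1,\dots,n\}$, fix distinct $i_1,i_2\in N$ and let $\hat N^c=N\setminus\{i_1,i_2\}$. Then the inequality $$\sum_{j\in\hat N^c}\left(x_{i_1j}+x_{ji_1}+x_{i_2j}\right)-x_{i_2i_1}-\sum_{j,j'\in\hat N^c:\,j\ne j'} x_{jj'}\le 3-\frac{(n-4)(n-5)}{2}$$ defines a facet of the weak order polytope $P^n_{WO}$.
   Context: Let $N=\{1,\dots,n\}$ and $A_N=\{(i,j): i,j\in N, i\ne j\}$. A weak order on $N$ is a binary relation $W\subseteq N\times N$ that is reflexive, transitive and total; $(i,j)\in W$ is read ''$i$ is preferred over or tied with $j$''. The characteristic vector of $W$ is $x^W\in\{0,1\}^{A_N}$ with $x^W_{(i,j)}=1$ if $(i,j)\in W$ and $0$ otherwise. The weak order polytope $P^n_{WO}$ is the convex hull of the characteristic vectors of all weak orders on $N$; its points are vectors $x\in\mathbb{R}^{A_N}$ and $x_{ij}$ denotes the coordinate $x_{(i,j)}$. $P^n_{WO}$ has dimension $n(n-1)$. An inequality $\pi x\le\pi_0$ defines a facet of a polytope $P$ if it is valid for $P$ (holds for all $x\in P$) and the face $P\cap\{x:\pi x=\pi_0\}$ is nonempty, proper, and contains $\dim(P)$ affinely independent points. *)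

(* Defs.v *)
From mathcomp Require Import all_boot all_order all_algebra.
Set Implicit Arguments. Unset Strict Implicit. Unset Printing Implicit Defensive.
Import Order.TTheory GRing.Theory Num.Theory.
Local Open Scope ring_scope.

Definition arc (n : nat) := {a : 'I_n * 'I_n | a.1 != a.2}.

Definition vec (R : Type) (n : nat) := arc n -> R.

Definition relN (n : nat) := {ffun 'I_n * 'I_n -> bool}.

Definition is_weak_order (n : nat) (W : relN n) : Prop :=
  (forall i, W (i, i)) /\
  (forall i j k, W (i, j) -> W (j, k) -> W (i, k)) /\
  (forall i j, W (i, j) || W (j, i)).

Definition charvec (R : numDomainType) (n : nat) (W : relN n) : vec R n :=
  fun a => if W (val a) then 1 else 0.

Definition in_PWO (R : numDomainType) (n : nat) (x : vec R n) : Prop :=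
  exists lam : relN n -> R,
    (forall W, 0 <= lam W) /\
    (forall W, ~ is_weak_order W -> lam W = 0) /\
    \sum_(W : relN n) lam W = 1 /\
    (forall a, x a = \sum_(W : relN n) lam W * charvec R W a).

Definition aff_indep (R : numDomainType) (n m : nat) (p : 'I_m -> vec R n) : Prop :=
  forall c : 'I_m -> R,
    (forall a, \sum_(k < m) c k * p k a = 0) -> \sum_(k < m) c k = 0 ->
    forall k, c k = 0.

Definition has_dim (R : numDomainType) (n : nat) (S : vec R n -> Prop) (d : nat) : Prop :=
  (exists p : 'I_d.+1 -> vec R n, (forall k, S (p k)) /\ aff_indep p) /\
  (forall p : 'I_d.+2 -> vec R n, (forall k, S (p k)) -> ~ aff_indep p).

Definition lin (R : numDomainType) (n : nat) (pi x : vec R n) : R :=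
  \sum_(a : arc n) pi a * x a.

Definition is_facet (R : numDomainType) (n : nat) (S : vec R n -> Prop)
  (pi : vec R n) (pi0 : R) : Prop :=
  (forall x, S x -> lin pi x <= pi0) /\
  (exists x, S x /\ lin pi x = pi0) /\
  (exists x, S x /\ lin pi x != pi0) /\
  (exists d, has_dim S d /\
     exists p : 'I_d -> vec R n,
       (forall k, S (p k) /\ lin pi (p k) = pi0) /\ aff_indep p).

Definition pi_ineq (R : numDomainType) (n : nat) (i1 i2 : 'I_n) : vec R n :=
  fun a =>
    let i := (val a).1 in let j := (val a).2 in
    let inC k := (k != i1) && (k != i2) in
    if (i == i1) && inC j then 1
    else if inC i && (j == i1) then 1
    else if (i == i2) && inC j then 1
    else if (i == i2) && (j == i1) then -1
    else if inC i && inC j then -1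
    else 0.

Definition pi0_ineq (R : numFieldType) (n : nat) : R :=
  3 - (n%:R - 4) * (n%:R - 5) / 2.

(* Main.v *)
Require Import Defs.
From mathcomp Require Import all_boot all_order all_algebra.
Import Order.TTheory GRing.Theory Num.Theory.
Local Open Scope ring_scope.
From mathcomp Require Import ring lra zify.
Require Import Defs.
Set Implicit Arguments. Unset Strict Implicit. Unset Printing Implicit Defensive.
Section LinAlg.
Variables (R : realFieldType) (n : nat).
Local Notation D := #|{: arc n}|.

Definition hv (x : vec R n) (t : R) : 'rV[R]_(D + 1) :=
  row_mx (\row_j x (enum_val j)) (\row_(j < 1) t : 'rV[R]_1).

Lemma sum_arc (F : arc n -> R) : \sum_(a : arc n) F a = \sum_(j < D) F (enum_val j).
Proof. by rewrite (reindex (fun j : 'I_D => (enum_val j : arc n))) //; apply: onW_bij; apply: enum_val_bij. Qed.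

Lemma hv_dot x t (v : 'rV[R]_(D + 1)) :
  \sum_(j < D + 1) hv x t 0 j * v 0 j =
  \sum_(a : arc n) x a * v 0 (lshift 1 (enum_rank a)) + t * v 0 (rshift D ord0).
Proof.
rewrite big_split_ord big_ord1 /hv row_mxEr sum_arc !mxE; congr (_ + _).
by apply: eq_bigr => j _; rewrite row_mxEl mxE enum_valK.
Qed.

Definition ptmx d (p : 'I_d -> vec R n) : 'M[R]_(d, D + 1) := \matrix_(k < d) hv (p k) 1.

Lemma ptmx_mul d (p : 'I_d -> vec R n) (u : 'rV[R]_d) :
  (forall a, (u *m ptmx p) 0 (lshift 1 (enum_rank a)) = \sum_(k < d) u 0 k * p k a) /\
  (u *m ptmx p) 0 (rshift D ord0) = \sum_(k < d) u 0 k.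
Proof.
split => [a|]; rewrite mxE; apply: eq_bigr => k _; rewrite /ptmx mxE /hv.
  by rewrite row_mxEl mxE enum_rankK.
by rewrite row_mxEr mxE mulr1.
Qed.

Lemma indep_of_free d (p : 'I_d -> vec R n) :
  (forall u : 'rV[R]_d, u *m ptmx p = 0 -> u = 0) -> aff_indep p.
Proof.
move=> Hf c Hc Hs k.
have H0 : (\row_k c k) *m ptmx p = 0.
  apply/rowP => j; rewrite [RHS]mxE -[j]splitK; case: (split j) => j' /=.
    rewrite -(enum_valK j'); have [-> _] := ptmx_mul p (\row_k c k).
    rewrite -[X in _ = X](Hc (enum_val j')); apply: eq_bigr => i _; rewrite mxE.
    done.
  rewrite ord1; have [_ ->] := ptmx_mul p (\row_k c k).
  by under eq_bigr do rewrite mxE; exact: Hs.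
by have := congr1 (fun M : 'rV[R]_d => M 0 k) (Hf _ H0); rewrite !mxE.
Qed.

Lemma notindep d (p : 'I_d -> vec R n) (u : 'rV[R]_d) :
  u != 0 -> u *m ptmx p = 0 -> ~ aff_indep p.
Proof.
move=> nz Hu Hi; case/eqP: nz; apply/rowP => k; rewrite [RHS]mxE.
have -> : u = \row_k (u 0 k) by apply/rowP => i; rewrite !mxE.
rewrite mxE; apply: (Hi (fun k => u 0 k) _ _ k) => [a|].
  by have [<- _] := ptmx_mul p u; rewrite Hu mxE.
by have [_ <-] := ptmx_mul p u; rewrite Hu mxE.
Qed.

Lemma no_big_indep (p : 'I_(D.+2) -> vec R n) : ~ aff_indep p.
Proof.
set K := kermx (ptmx p).
have hK : \rank K = (D.+2 - \rank (ptmx p))%N by rewrite mxrank_ker.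
have hr : (\rank (ptmx p) <= D + 1)%N by exact: rank_leq_col.
have nzK : K != 0.
  rewrite -mxrank_eq0 hK subn_eq0 -ltnNge.
  by apply: leq_ltn_trans hr _; rewrite addn1.
case: (pickP (fun i => row i K != 0)) => [i nzi|H0]; last first.
  case/eqP: nzK; apply/row_matrixP => i; rewrite row0; apply/eqP.
  by move: (H0 i) => /negbFE.
apply: (notindep nzi).
by rewrite -row_mul mulmx_ker row0.
Qed.

Section Extract.
Variable P : pred (relN n).
Local Notation NR := #|{: relN n}|.

Definition Mf : 'M[R]_(NR, D + 1) :=
  \matrix_(i < NR) (if P (enum_val i) then hv (charvec R (enum_val i)) 1 else 0).

Lemma rank_Mf (w : 'rV[R]_(D + 1)) :
  (forall v : 'rV_(D + 1), v *m Mf^T = 0 -> exists l, v = l *: w) ->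
  (D + 1 <= \rank Mf + \rank w)%N.
Proof.
move=> Hk; set K := kermx Mf^T.
have sKw : (K <= w)%MS.
  apply/row_subP => i.
  have : row i K *m Mf^T = 0 by rewrite -row_mul mulmx_ker row0.
  by case/Hk => l ->; apply: scalemx_sub.
have := mxrankS sKw; rewrite mxrank_ker mxrank_tr.
by rewrite leq_subLR.
Qed.

Lemma kernel_of (wc : vec R n) (w0 : R) :
  (forall c c0, (forall W, P W -> lin c (charvec R W) + c0 = 0) ->
     exists l, (forall a, c a = l * wc a) /\ c0 = l * w0) ->
  forall v : 'rV_(D + 1), v *m Mf^T = 0 -> exists l, v = l *: hv wc w0.
Proof.
move=> H v Hv.
pose c := fun a : arc n => v 0 (lshift 1 (enum_rank a)).
pose c0 := v 0 (rshift D ord0).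
have [|l [Hc Hc0]] := H c c0.
  move=> W PW.
  have := congr1 (fun M : 'M[R]_(1, NR) => M 0 (enum_rank W)) Hv.
  rewrite !mxE => <-.
  rewrite /lin; apply/esym.
  have -> : \sum_(j < D + 1) v 0 j * Mf^T j (enum_rank W) =
            \sum_(j < D + 1) hv (charvec R W) 1 0 j * v 0 j.
    by apply: eq_bigr => j _; rewrite [in LHS]mxE [in LHS]mxE enum_rankK PW mulrC.
  rewrite hv_dot mul1r; congr (_ + _).
  by apply: eq_bigr => a _; rewrite mulrC.
exists l; apply/rowP => j; rewrite -[j]splitK; case: (split j) => j' /=.
  rewrite mxE /hv row_mxEl mxE -Hc /c enum_valK; done.
by rewrite ord1 mxE /hv row_mxEr mxE -Hc0.
Qed.

Lemma extract d : (d <= \rank Mf)%N ->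
  exists q : 'I_d -> relN n, (forall k, P (q k)) /\ aff_indep (fun k => charvec R (q k)).
Proof.
move=> hd.
set f := maxrankfun Mf.
have hfree := maxrowsub_free Mf; rewrite -/f in hfree.
pose g := fun k : 'I_d => f (widen_ord hd k).
have HP : forall k, P (enum_val (g k)).
  move=> k; apply/negPn/negP => nP.
  have : row (widen_ord hd k) (rowsub f Mf) == 0.
    rewrite row_rowsub; apply/eqP/rowP => j.
    by rewrite !mxE /g (negbTE nP) mxE.
  rewrite rowE mulmx_free_eq0 // => /eqP/matrixP/(_ 0 (widen_ord hd k)).
  by rewrite !mxE !eqxx /= => /eqP; rewrite oner_eq0.
exists (fun k => enum_val (g k)); split => //.
apply: indep_of_free => u Hu.
pose S : 'M[R]_(d, \rank Mf) := rowsub (widen_ord hd) 1%:M.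
have E : ptmx (fun k => charvec R (enum_val (g k))) = S *m rowsub f Mf.
  rewrite -rowsubE; apply/row_matrixP => k.
  rewrite row_rowsub /ptmx rowK row_rowsub /g.
  by rewrite rowK -/(g k) HP.
have : (u *m S) *m rowsub f Mf == 0 by rewrite -mulmxA -E Hu.
rewrite mulmx_free_eq0 // => /eqP uS.
apply/rowP => k; rewrite mxE.
have := congr1 (fun M : 'rV[R]_(\rank Mf) => M 0 (widen_ord hd k)) uS.
rewrite !mxE => <-.
rewrite (bigD1 k) //= big1 ?addr0.
  by rewrite !mxE eqxx mulr1.
move=> i ik; rewrite !mxE.
have -> : (widen_ord hd i == widen_ord hd k) = false.
  by apply/negbTE; apply: contra ik => /eqP [] /= h; apply/eqP/val_inj.
by rewrite mulr0.
Qed.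
End Extract.
End LinAlg.

Section Gen.
Variables (R : realFieldType) (n : nat).
Local Notation D := #|{: arc n}|.

Lemma full_dim_gen (P : pred (relN n)) :
  (forall c c0, (forall W, P W -> lin c (charvec R W) + c0 = 0) -> (forall a, c a = 0) /\ c0 = 0) ->
  exists q : 'I_(D.+1) -> relN n, (forall k, P (q k)) /\ aff_indep (fun k => charvec R (q k)).
Proof.
move=> H.
have H' : (forall c c0, (forall W, P W -> lin c (charvec R W) + c0 = 0) ->
     exists l, (forall a, c a = l * (fun _ : arc n => (0:R)) a) /\ c0 = l * 0).
  move=> c c0 /H [h1 h2]; exists 0; split => [a|]; by rewrite ?h1 ?h2 mulr0.
have Hk := kernel_of H'.
have h0 : hv (fun _ : arc n => (0:R)) 0 = 0.
  by apply/rowP => j; rewrite -[j]splitK; case: (split j) => j' /=;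
     rewrite /hv ?row_mxEl ?row_mxEr !mxE.
have := rank_Mf Hk; rewrite h0 mxrank0 addn0 => hr.
apply: extract; by rewrite -addn1.
Qed.

Lemma face_dim_gen (P : pred (relN n)) (wc : vec R n) (w0 : R) :
  (forall c c0, (forall W, P W -> lin c (charvec R W) + c0 = 0) ->
     exists l, (forall a, c a = l * wc a) /\ c0 = l * w0) ->
  exists q : 'I_D -> relN n, (forall k, P (q k)) /\ aff_indep (fun k => charvec R (q k)).
Proof.
move=> /kernel_of Hk.
have := rank_Mf Hk => hr.
have h1 := rank_leq_row (hv wc w0).
apply: extract.
by rewrite -(leq_add2r 1); apply: (leq_trans hr); rewrite leq_add2l.
Qed.

Definition b01 (x : bool) : R := if x then 1 else 0.

Definition cc (c : vec R n) (i j : 'I_n) : R :=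
  if (insub (i, j) : option (arc n)) is Some a then c a else 0.

Lemma cc_arc c (a : arc n) : cc c (val a).1 (val a).2 = c a.
Proof. by rewrite /cc -surjective_pairing valK. Qed.

Lemma cc_diag c i : cc c i i = 0.
Proof. by rewrite /cc insubN //= eqxx. Qed.

Lemma ccE c i j (h : i != j) : cc c i j = c (exist _ (i, j) h).
Proof.
rewrite /cc insubT /=; congr (c _); exact: val_inj.
Qed.

Lemma lin_pairs c (W : relN n) :
  lin c (charvec R W) = \sum_i \sum_j cc c i j * b01 (W (i, j)).
Proof.
rewrite pair_bigA /= (bigID (fun p : 'I_n * 'I_n => p.1 != p.2)) /=.
rewrite [X in _ = _ + X]big1 ?addr0; last first.
  by move=> [i j] /negbNE /= /eqP ->; rewrite cc_diag mul0r.
rewrite /lin (reindex_omap (val : arc n -> _) insub); last first.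
  by move=> p hp; rewrite insubT.
apply: eq_big => [a|a _].
  by rewrite valK eqxx (valP a).
by rewrite cc_arc -surjective_pairing /charvec /b01.
Qed.
End Gen.

Section Score.
Variables (R : realFieldType) (n : nat).

Definition sc (S : seq 'I_n) (h : 'I_n -> nat) (x : 'I_n) : nat :=
  if x \in S then (n + h x)%N else val x.

Definition Wsc (S : seq 'I_n) (h : 'I_n -> nat) : relN n :=
  [ffun p => (sc S h p.2 <= sc S h p.1)%N].

Lemma weak_sc S h : is_weak_order (Wsc S h).
Proof.
split; [|split].
- by move=> i; rewrite ffunE.
- by move=> i j k; rewrite !ffunE /= => h1 h2; exact: leq_trans h2 h1.
- by move=> i j; rewrite !ffunE leq_total.
Qed.

Lemma scW S h (i j : 'I_n) : (i \notin S) || (j \notin S) ->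
  (sc S h j <= sc S h i)%N =
  (if i \in S then true else if j \in S then false else (val j <= val i)%N).
Proof.
rewrite /sc; case: (i \in S); case: (j \in S) => //= _.
- by apply: (leq_trans (ltnW (ltn_ord j))); rewrite leq_addr.
- by apply/negbTE; rewrite -ltnNge; apply: (leq_trans (ltn_ord i)); rewrite leq_addr.
Qed.

Lemma scIn S h (i j : 'I_n) : i \in S -> j \in S ->
  (sc S h j <= sc S h i)%N = (h j <= h i)%N.
Proof. by rewrite /sc => -> ->; rewrite leq_add2l. Qed.

Lemma sum_restrict (S : seq 'I_n) (G : 'I_n -> R) : uniq S ->
  (forall i, i \notin S -> G i = 0) -> \sum_i G i = \sum_(i <- S) G i.
Proof.
move=> uS HG; rewrite [RHS]big_uniq // (bigID (fun i => i \in S)) /=.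
by rewrite [X in _ + X]big1 ?addr0.
Qed.

Lemma diff_sc (c : vec R n) S h1 h2 : uniq S ->
  lin c (charvec R (Wsc S h1)) - lin c (charvec R (Wsc S h2)) =
  \sum_(i <- S) \sum_(j <- S) cc c i j * (b01 R (h1 j <= h1 i)%N - b01 R (h2 j <= h2 i)%N).
Proof.
move=> uS; rewrite !lin_pairs -sumrB.
have E : forall i j, cc c i j * b01 R (Wsc S h1 (i, j)) - cc c i j * b01 R (Wsc S h2 (i, j)) =
   if (i \in S) && (j \in S) then cc c i j * (b01 R (h1 j <= h1 i)%N - b01 R (h2 j <= h2 i)%N) else 0.
  move=> i j; rewrite !ffunE /=.
  case: ifP => [/andP [iS jS]|]; first by rewrite !scIn // mulrBr.
  move/negbT; rewrite negb_and => hij.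
  by rewrite !scW // subrr.
under eq_bigr do rewrite -sumrB.
under eq_bigr do under eq_bigr do rewrite E.
rewrite (sum_restrict uS); last first.
  by move=> i /negbTE iS; apply: big1 => j _; rewrite iS.
apply: eq_big_seq => i iS; rewrite (sum_restrict uS); last first.
  by move=> j /negbTE jS; rewrite iS jS andbF.
by apply: eq_big_seq => j jS; rewrite iS jS.
Qed.

Definition wob (W : relN n) : bool :=
  [&& [forall i, W (i, i)],
      [forall i, forall j, forall k, W (i, j) ==> W (j, k) ==> W (i, k)] &
      [forall i, forall j, W (i, j) || W (j, i)]].

Lemma wobP W : reflect (is_weak_order W) (wob W).
Proof.
apply: (iffP and3P) => [[/forallP h1 h2 /forallP h3]|[h1 [h2 h3]]].
  split; [by []|split].
    move=> i j k; move/forallP: h2 => /(_ i) /forallP /(_ j) /forallP /(_ k).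
    by move=> /implyP H /H /implyP.
  by move=> i j; move/forallP: (h3 i) => /(_ j).
split; first by apply/forallP.
  apply/forallP => i; apply/forallP => j; apply/forallP => k.
  by apply/implyP => a; apply/implyP; apply: h2.
by apply/forallP => i; apply/forallP => j.
Qed.

Lemma PWO_weak (W : relN n) : is_weak_order W -> in_PWO (charvec R W).
Proof.
move=> hW; exists (fun V => if V == W then 1 else 0); split; [|split; [|split]].
- by move=> V; case: eqP.
- by move=> V; case: eqP => // ->.
- by rewrite -big_mkcond big_pred1_eq.
- move=> a; rewrite (bigD1 W) //= eqxx mul1r big1 ?addr0 //.
  by move=> V /negbTE ->; rewrite mul0r.
Qed.

End Score.

Section Ineq.
Variables (R : realFieldType) (n : nat) (i1 i2 : 'I_n).
Hypothesis n12 : i1 != i2.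
Local Notation pi := (pi_ineq R i1 i2).
Local Notation bR := (b01 R).

Definition inC (x : 'I_n) := (x != i1) && (x != i2).

Lemma n21 : (i2 == i1) = false.
Proof. by apply/negbTE; rewrite eq_sym. Qed.
Lemma n12f : (i1 == i2) = false.
Proof. exact/negbTE. Qed.

Lemma inC1 j : inC j -> (j == i1) = false.
Proof. by case/andP => /negbTE. Qed.
Lemma inC2 j : inC j -> (j == i2) = false.
Proof. by case/andP => _ /negbTE. Qed.
Lemma inC1' j : inC j -> (i1 == j) = false.
Proof. by rewrite eq_sym => /inC1. Qed.
Lemma inC2' j : inC j -> (i2 == j) = false.
Proof. by rewrite eq_sym => /inC2. Qed.

Ltac ccpi_tac := rewrite ccE /pi_ineq /= ?eqxx ?n21 ?n12f ?inC1 ?inC2 ?inC1' ?inC2' //=.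

Lemma ccpi_12 : cc pi i1 i2 = 0.
Proof. by rewrite (ccE _ n12) /pi_ineq /= !eqxx n12f n21. Qed.
Lemma ccpi_21 : cc pi i2 i1 = -1.
Proof. have h : i2 != i1 by rewrite n21. by rewrite (ccE _ h) /pi_ineq /= !eqxx n12f n21. Qed.
Lemma ccpi_1j j : inC j -> cc pi i1 j = 1.
Proof.
move=> jC; have h : i1 != j by rewrite inC1'.
by rewrite (ccE _ h) /pi_ineq /= !eqxx (inC1 jC) (inC2 jC).
Qed.
Lemma ccpi_j1 j : inC j -> cc pi j i1 = 1.
Proof.
move=> jC; have h : j != i1 by rewrite inC1.
by rewrite (ccE _ h) /pi_ineq /= !eqxx (inC1 jC) (inC2 jC) n12f.
Qed.
Lemma ccpi_2j j : inC j -> cc pi i2 j = 1.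
Proof.
move=> jC; have h : i2 != j by rewrite inC2'.
by rewrite (ccE _ h) /pi_ineq /= !eqxx (inC1 jC) (inC2 jC) n21.
Qed.
Lemma ccpi_j2 j : inC j -> cc pi j i2 = 0.
Proof.
move=> jC; have h : j != i2 by rewrite inC2.
by rewrite (ccE _ h) /pi_ineq /= !eqxx (inC1 jC) (inC2 jC) n21.
Qed.
Lemma ccpi_jk j k : inC j -> inC k -> j != k -> cc pi j k = -1.
Proof.
move=> jC kC h.
by rewrite (ccE _ h) /pi_ineq /= (inC1 jC) (inC2 jC) (inC1 kC) (inC2 kC).
Qed.

Lemma split3 (F : 'I_n -> R) : \sum_i F i = F i1 + F i2 + \sum_(i | inC i) F i.
Proof.
rewrite (bigD1 i1) //= (bigD1 i2) /=; last by rewrite n21.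
by rewrite addrA.
Qed.

Definition mR : R := \sum_(j | inC j) 1.
Definition MM : R := \sum_(i | inC i) \sum_(j | inC j && (j != i)) 1.

Lemma exch (F : 'I_n -> 'I_n -> R) :
  \sum_(i | inC i) \sum_(j | inC j && (j != i)) F j i =
  \sum_(i | inC i) \sum_(j | inC j && (j != i)) F i j.
Proof.
rewrite (exchange_big_dep inC) /=; last by move=> i j _ /andP [].
apply: eq_bigr => i iC; apply: eq_bigl => j.
by rewrite iC /= eq_sym.
Qed.

Lemma mR_val : mR = n%:R - 2.
Proof.
have := split3 (fun _ => 1); rewrite /= sumr_const card_ord -/mR => ->.
lra.
Qed.

Lemma MM_val : MM = mR * (mR - 1).
Proof.
rewrite /MM (eq_bigr (fun _ => 1 * (mR - 1))); last first.
  move=> i iC; rewrite mul1r /mR [X in _ = X - 1](bigD1 i) //=.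
  by rewrite addrC addrK.
by rewrite -mulr_suml.
Qed.

Lemma pi0_val : 2 * pi0_ineq R n = 4 * mR - MM.
Proof.
rewrite MM_val /pi0_ineq.
have -> : (n%:R : R) = mR + 2 by rewrite mR_val; lra.
by field.
Qed.

Section W.
Variable W : relN n.
Local Notation bW x y := (bR (W (x, y))).
Local Notation t x y := (bR (W (x, y) && W (y, x))).

Lemma lin_pi : lin pi (charvec R W) =
  \sum_(j | inC j) (bW i1 j + bW j i1 + bW i2 j) - bW i2 i1
  - \sum_(i | inC i) \sum_(j | inC j && (j != i)) bW i j.
Proof.
have E : forall i, \sum_j cc pi i j * bW i j =
   cc pi i i1 * bW i i1 + cc pi i i2 * bW i i2 + \sum_(j | inC j) cc pi i j * bW i j.
  by move=> i; rewrite split3.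
rewrite lin_pairs split3 !E.
under [X in _ + _ + X = _]eq_bigr => i iC do rewrite E (ccpi_j1 iC) (ccpi_j2 iC).
rewrite !cc_diag ccpi_12 ccpi_21.
have -> : \sum_(j | inC j) cc pi i1 j * bW i1 j = \sum_(j | inC j) bW i1 j.
  by apply: eq_bigr => j jC; rewrite ccpi_1j // mul1r.
have -> : \sum_(j | inC j) cc pi i2 j * bW i2 j = \sum_(j | inC j) bW i2 j.
  by apply: eq_bigr => j jC; rewrite ccpi_2j // mul1r.
have -> : \sum_(i | inC i) (1 * bW i i1 + 0 * bW i i2 + \sum_(j | inC j) cc pi i j * bW i j)
   = \sum_(i | inC i) bW i i1 - \sum_(i | inC i) \sum_(j | inC j && (j != i)) bW i j.
  rewrite -sumrB; apply: eq_bigr => i iC.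
  rewrite mul1r mul0r addr0 (bigD1 i) //= cc_diag mul0r add0r -sumrN.
  congr (_ + _); apply: eq_bigr => j /andP [jC ji].
  by rewrite ccpi_jk // 1?eq_sym // mulN1r.
rewrite !big_split /=.
lra.
Qed.

Hypothesis tot : forall x y, W (x, y) || W (y, x).

Lemma tie x y : bW x y + bW y x = 1 + t x y.
Proof.
move: (tot x y); rewrite /b01.
by case: (W (x, y)); case: (W (y, x)) => //= _; rewrite ?addr0 ?add0r.
Qed.

Definition T1 := \sum_(j | inC j) t i1 j.
Definition A2 := \sum_(j | inC j) bW i2 j.
Definition TT := \sum_(i | inC i) \sum_(j | inC j && (j != i)) t i j.

Lemma lin_pi2 : 2 * lin pi (charvec R W) = 2 * (mR + T1 + A2 - bW i2 i1) - (MM + TT).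
Proof.
rewrite lin_pi.
have -> : \sum_(j | inC j) (bW i1 j + bW j i1 + bW i2 j) = mR + T1 + A2.
  rewrite (eq_bigr (fun j => 1 + t i1 j + bW i2 j)); last by move=> j _; rewrite tie.
  by rewrite !big_split.
have h2 : 2 * (\sum_(i | inC i) \sum_(j | inC j && (j != i)) bW i j) = MM + TT.
  rewrite mulr2n mulrDl mul1r.
  rewrite -[X in _ + X = _](exch (fun i j => bW i j)) /=.
  rewrite -big_split /= /MM /TT -big_split /=; apply: eq_bigr => i _.
  rewrite -!big_split /=; apply: eq_bigr => j _; exact: tie.
lra.
Qed.
Lemma bR_ge0 b : 0 <= bR b.
Proof. by rewrite /b01 /=; case: b. Qed.
Lemma bR_le1 b : bR b <= 1.
Proof. by rewrite /b01 /=; case: b. Qed.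

Hypothesis trans : forall x y z, W (x, y) -> W (y, z) -> W (x, z).

Lemma core : 2 * (T1 + A2 - bW i2 i1) - TT <= 2 * mR.
Proof.
have TT0 : 0 <= TT.
  by apply: sumr_ge0 => i _; apply: sumr_ge0 => j _; exact: bR_ge0.
case h21 : (W (i2, i1)).
- have A2le : A2 <= mR by apply: ler_sum => j _; exact: bR_le1.
  have T1le : 2 * T1 <= 2 + TT.
    case: (pickP (fun j => inC j && (W (i1, j) && W (j, i1)))) => [j0 /andP [j0C hj0] | none].
    + set Rj := \sum_(j | inC j && (j != j0)) t j0 j.
      have e1 : T1 <= 1 + Rj.
        rewrite /T1 (bigD1 j0) //= hj0 lerD2l; apply: ler_sum => j /andP [jC jj0].
        case E : (W (i1, j) && W (j, i1)); last exact: bR_ge0.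
        case/andP: E => a b; case/andP: hj0 => c d.
        by rewrite (trans d a) (trans b c).
      have e2 : Rj <= \sum_(i | inC i && (i != j0)) \sum_(j | inC j && (j != i)) t i j.
        apply: ler_sum => i /andP [iC ij0].
        rewrite (bigD1 j0) /=; last by rewrite j0C eq_sym.
        rewrite andbC lerDl; apply: sumr_ge0 => j _; exact: bR_ge0.
      have e3 : TT = Rj + \sum_(i | inC i && (i != j0)) \sum_(j | inC j && (j != i)) t i j.
        by rewrite /TT (bigD1 j0).
      lra.
    + have -> : T1 = 0.
        rewrite /T1 big1 // => j jC; have := none j; rewrite /= jC /= => ->; done.
      lra.
  change (bR true) with (1:R).
  lra.
- change (bR false) with (0:R).
  have : T1 + A2 <= mR.
    rewrite /T1 /A2 /mR -big_split; apply: ler_sum => j jC.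
    case E : (W (i1, j) && W (j, i1)); case F : (W (i2, j)); rewrite /b01 /=.
    + by case/andP: E => _ b; move: (trans F b); rewrite h21.
    + by rewrite addr0.
    + by rewrite add0r.
    + by rewrite addr0.
  lra.
Qed.

Lemma valid : lin pi (charvec R W) <= pi0_ineq R n.
Proof.
have h1 := lin_pi2; have h2 := core; have h3 := pi0_val.
lra.
Qed.

Lemma tight_base :
  (forall j, inC j -> W (j, i1) = false) -> (forall j, inC j -> W (i2, j)) ->
  W (i2, i1) = false ->
  (forall i j, inC i -> inC j -> i != j -> (W (i, j) && W (j, i)) = false) ->
  lin pi (charvec R W) = pi0_ineq R n.
Proof.
move=> h1 h2 h3 h4.
have eT1 : T1 = 0 by rewrite /T1 big1 // => j jC; rewrite h1 // andbF.
have eA2 : A2 = mR by apply: eq_bigr => j jC; rewrite h2.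
have eTT : TT = 0.
  rewrite /TT big1 // => i iC; rewrite big1 // => j /andP [jC ji].
  by rewrite h4 // eq_sym.
have h := lin_pi2; have h' := pi0_val.
rewrite eT1 eA2 eTT h3 in h.
have : bR false = 0 by [].
lra.
Qed.
End W.
Section Face.
Variables u k : 'I_n.
Hypotheses (uC : inC u) (kC : inC k) (uk : u != k).

Definition S4 := [:: i1; i2; u; k].
Lemma uS4 : uniq S4.
Proof.
rewrite /S4 /= !inE !negb_or n12 !(inC1' uC) !(inC2' uC) !(inC1' kC) !(inC2' kC) uk.
done.
Qed.

Definition h4 (a1 a2 au ak : nat) (x : 'I_n) : nat :=
  if x == i1 then a1 else if x == i2 then a2 else if x == u then au else ak.

Definition O a1 a2 au ak := Wsc S4 (h4 a1 a2 au ak).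

Lemma ku : (k == u) = false.
Proof. by apply/negbTE; rewrite eq_sym. Qed.
Lemma uk' : (u == k) = false.
Proof. exact/negbTE. Qed.

Ltac dsimp := rewrite /h4 !eqxx ?n21 ?(inC1 uC) ?(inC2 uC) ?(inC1 kC) ?(inC2 kC) ?ku /b01 /=.

Lemma scO a1 a2 au ak (j : 'I_n) :
  sc S4 (h4 a1 a2 au ak) j =
  if j == i1 then (n + a1)%N else if j == i2 then (n + a2)%N else
  if j == u then (n + au)%N else if j == k then (n + ak)%N else val j.
Proof.
rewrite /sc /S4 !inE /h4.
case: (eqVneq j i1) => //= _; case: (eqVneq j i2) => //= _.
case: (eqVneq j u) => //= _; case: (eqVneq j k) => //= _.
Qed.

Lemma scO_inj a1 a2 au ak (i j : 'I_n) : au != ak -> inC i -> inC j ->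
  sc S4 (h4 a1 a2 au ak) i = sc S4 (h4 a1 a2 au ak) j -> i = j.
Proof.
move=> auk iC jC; rewrite !scO (inC1 iC) (inC2 iC) (inC1 jC) (inC2 jC).
have hlt : forall (x : 'I_n) a, (val x == n + a)%N = false.
  move=> x a; apply/negbTE; rewrite neq_ltn; apply/orP; left.
  by apply: (leq_trans (ltn_ord x)); rewrite leq_addr.
case iu: (i == u); case ju: (j == u); case ik: (i == k); case jk: (j == k) => /= E;
first [ by apply/eqP; rewrite (eqP iu) (eqP ju)
      | by apply/eqP; rewrite (eqP ik) (eqP jk)
      | by move: uk; rewrite -(eqP iu) -(eqP ik) eqxx
      | by move: uk; rewrite -(eqP ju) -(eqP jk) eqxx
      | by move/eqP: E; rewrite eqn_add2l ?(negbTE auk) 1?eq_sym ?(negbTE auk)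
      | by move/eqP: E; rewrite ?hlt 1?eq_sym ?hlt
      | exact: val_inj E ].
Qed.

Lemma O_weak a1 a2 au ak : wob (O a1 a2 au ak).
Proof. apply/wobP; exact: weak_sc. Qed.

Lemma base_tight : lin pi (charvec R (O 3 2 1 0)) = pi0_ineq R n.
Proof.
have tot : forall x y, O 3 2 1 0 (x, y) || O 3 2 1 0 (y, x).
  by move=> x y; rewrite !ffunE leq_total.
have tr : forall x y z, O 3 2 1 0 (x, y) -> O 3 2 1 0 (y, z) -> O 3 2 1 0 (x, z).
  by move: (weak_sc S4 (h4 3 2 1 0)) => [_ [h _]].
have ltn_n : forall j : 'I_n, (val j < n)%N := fun j => ltn_ord j.
apply: tight_base => //.
- move=> j jC; rewrite ffunE /= !scO eqxx (inC1 jC) (inC2 jC).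
  case: (eqVneq j u) => _; first by rewrite leq_add2l.
  case: (eqVneq j k) => _; first by rewrite leq_add2l.
  by apply/negbTE; rewrite -ltnNge; apply: (leq_trans (ltn_n j)); rewrite leq_addr.
- move=> j jC; rewrite ffunE /= !scO eqxx (inC1 jC) (inC2 jC) n21.
  case: (eqVneq j u) => _; first by rewrite leq_add2l.
  case: (eqVneq j k) => _; first by rewrite leq_add2l.
  by apply: (leq_trans (ltnW (ltn_n j))); rewrite leq_addr.
- by rewrite ffunE /= !scO !eqxx n21 leq_add2l.
- move=> i j iC jC ij; rewrite !ffunE /=; apply/negbTE; rewrite -eqn_leq.
  apply: contra ij => /eqP E; apply/eqP/esym; exact: (scO_inj (a1:=3) (a2:=2) (au:=1) (ak:=0) isT jC iC E).
Qed.

Definition dd (x y x' y' : nat) : R := b01 R (y <= x)%N - b01 R (y' <= x')%N.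

Lemma diffO c a1 a2 au ak b1 b2 bu bk :
  lin c (charvec R (O a1 a2 au ak)) - lin c (charvec R (O b1 b2 bu bk)) =
  cc c i1 i2 * dd a1 a2 b1 b2 + cc c i1 u * dd a1 au b1 bu + cc c i1 k * dd a1 ak b1 bk +
  cc c i2 i1 * dd a2 a1 b2 b1 + cc c i2 u * dd a2 au b2 bu + cc c i2 k * dd a2 ak b2 bk +
  cc c u i1 * dd au a1 bu b1 + cc c u i2 * dd au a2 bu b2 + cc c u k * dd au ak bu bk +
  cc c k i1 * dd ak a1 bk b1 + cc c k i2 * dd ak a2 bk b2 + cc c k u * dd ak au bk bu.
Proof.
rewrite diff_sc ?uS4 // !big_cons !big_nil !cc_diag /h4 !eqxx ?n21 ?(inC1 uC) ?(inC2 uC)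
  ?(inC1 kC) ?(inC2 kC) ?ku /dd.
rewrite !mul0r !add0r !addr0. 
ring.
Qed.

Lemma kune : k != u.
Proof. by rewrite eq_sym. Qed.

Ltac tight_tac a1 a2 au ak :=
  move: (diffO (pi_ineq R i1 i2) a1 a2 au ak 3%N 2%N 1%N 0%N) base_tight;
  rewrite /dd /b01 /=;
  rewrite ccpi_12 ccpi_21 (ccpi_1j uC) (ccpi_1j kC) (ccpi_j1 uC) (ccpi_j1 kC)
    (ccpi_2j uC) (ccpi_2j kC) (ccpi_j2 uC) (ccpi_j2 kC) (ccpi_jk uC kC uk)
    (ccpi_jk kC uC kune);
  move=> ? ?; lra.

Lemma tO1 : lin pi (charvec R (O 3 2 2 0)) = pi0_ineq R n. Proof. tight_tac 3%N 2%N 2%N 0%N. Qed.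
Lemma tO2 : lin pi (charvec R (O 3 2 0 1)) = pi0_ineq R n. Proof. tight_tac 3%N 2%N 0%N 1%N. Qed.
Lemma tO3 : lin pi (charvec R (O 1 2 0 1)) = pi0_ineq R n. Proof. tight_tac 1%N 2%N 0%N 1%N. Qed.
Lemma tO4 : lin pi (charvec R (O 2 2 0 2)) = pi0_ineq R n. Proof. tight_tac 2%N 2%N 0%N 2%N. Qed.
Lemma tO5 : lin pi (charvec R (O 1 2 1 1)) = pi0_ineq R n. Proof. tight_tac 1%N 2%N 1%N 1%N. Qed.
Lemma tO6 : lin pi (charvec R (O 0 2 1 0)) = pi0_ineq R n. Proof. tight_tac 0%N 2%N 1%N 0%N. Qed.
Lemma tO7 : lin pi (charvec R (O 2 1 0 2)) = pi0_ineq R n. Proof. tight_tac 2%N 1%N 0%N 2%N. Qed.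

Lemma face_rels c c0 :
  (forall W, wob W && (lin pi (charvec R W) == pi0_ineq R n) -> lin c (charvec R W) + c0 = 0) ->
  cc c u i2 = 0 /\ cc c u k = cc c k u /\ cc c i1 i2 + cc c k i2 = 0 /\
      cc c u i1 + cc c u k = 0 /\ cc c i1 u + cc c k u = 0 /\
      cc c i1 i2 + cc c k i2 - cc c i2 i1 - cc c i2 k = 0 /\
      cc c k i1 + cc c k i2 - cc c i2 k = 0.
Proof.
move=> H.
have L : forall a1 a2 au ak, lin pi (charvec R (O a1 a2 au ak)) = pi0_ineq R n ->
    lin c (charvec R (O a1 a2 au ak)) = - c0.
  move=> a1 a2 au ak ht; apply/eqP; rewrite -addr_eq0; apply/eqP; apply: H.
  by rewrite O_weak ht eqxx.
have LB := L _ _ _ _ base_tight.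
have L1 := L _ _ _ _ tO1. have L2 := L _ _ _ _ tO2. have L3 := L _ _ _ _ tO3.
have L4 := L _ _ _ _ tO4. have L5 := L _ _ _ _ tO5. have L6 := L _ _ _ _ tO6.
have L7 := L _ _ _ _ tO7.
have e1 := diffO c 3 2 2 0 3 2 1 0; rewrite L1 LB subrr /dd /b01 /= in e1.
have e3 := diffO c 3 2 0 1 3 2 1 0; rewrite L2 LB subrr /dd /b01 /= in e3.
have e2 := diffO c 1 2 0 1 2 2 0 2; rewrite L3 L4 subrr /dd /b01 /= in e2.
have e4 := diffO c 1 2 0 1 1 2 1 1; rewrite L3 L5 subrr /dd /b01 /= in e4.
have e5 := diffO c 0 2 1 0 1 2 1 1; rewrite L6 L5 subrr /dd /b01 /= in e5.
have e6 := diffO c 2 1 0 2 1 2 0 1; rewrite L7 L3 subrr /dd /b01 /= in e6.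
have e7 := diffO c 3 2 0 1 2 1 0 2; rewrite L2 L7 subrr /dd /b01 /= in e7.
split; [lra|split; [lra|split; [lra|split; [lra|split; [lra|split; lra]]]]].
Qed.


End Face.

End Ineq.

Section Final.
Variables (R : realFieldType) (n : nat) (i1 i2 : 'I_n).
Hypotheses (n4 : (4 <= n)%N) (n12 : i1 != i2).
Local Notation pi := (pi_ineq R i1 i2).
Local Notation pi0 := (pi0_ineq R n).
Local Notation inC := (inC i1 i2).

Lemma other (a b c : 'I_n) : exists x : 'I_n, [&& x != a, x != b & x != c].
Proof.
have h := cardC (mem [:: a; b; c]); rewrite card_ord in h.
have hs := card_size [:: a; b; c].
have : (0 < #|[predC [:: a; b; c]]|)%N.
  rewrite /= in hs; move: h hs n4; set m := #|_|; set p := #|_|. lia.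
case/card_gt0P => x; rewrite !inE !negb_or => hx; by exists x.
Qed.

Lemma otherC (j : 'I_n) : exists p, [&& inC p & p != j].
Proof.
have [p /and3P [h1 h2 h3]] := other i1 i2 j; exists p.
by rewrite h3 andbT; apply/andP.
Qed.
Definition Pface (W : relN n) : bool := wob W && (lin pi (charvec R W) == pi0).

Lemma lin_scale (c : vec R n) l x : (forall a, c a = l * pi a) -> lin c x = l * lin pi x.
Proof.
move=> Hc; rewrite /lin mulr_sumr; apply: eq_bigr => a _; by rewrite Hc mulrA.
Qed.

Lemma face_kernel c c0 : (forall W, Pface W -> lin c (charvec R W) + c0 = 0) ->
  exists l, (forall a, c a = l * pi a) /\ c0 = l * - pi0.
Proof.
move=> H.
have Hr := fun u k uC kC uk => @face_rels R n i1 i2 n12 u k uC kC uk c c0 H.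
have [k0 /andP [k0C _]] := otherC i1.
set l := cc c k0 i1.
have F1 : forall j, inC j -> cc c j i1 = l.
  move=> j jC; case: (eqVneq j k0) => [->|jk] //.
  have [_ [h3 [_ [h4 _]]]] := Hr _ _ jC k0C jk.
  have [_ [_ [_ [h4' _]]]] := Hr _ _ k0C jC (negbT (introF eqP (fun e => (negP jk) (introT eqP (esym e))))).
  rewrite /l; lra.
have F2 : forall j, inC j -> cc c i1 j = l.
  move=> j jC; have [p /andP [pC pj]] := otherC j.
  have jp : j != p by rewrite eq_sym.
  have [_ [h3 [_ [h4 [h5 _]]]]] := Hr _ _ jC pC jp.
  have [_ [_ [_ [_ [h5' _]]]]] := Hr _ _ pC jC pj.
  have := F1 _ jC; lra.
have F5 : forall j, inC j -> cc c j i2 = 0.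
  move=> j jC; have [p /andP [pC pj]] := otherC j.
  have jp : j != p by rewrite eq_sym.
  by have [h1 _] := Hr _ _ jC pC jp.
have F3 : forall j j', inC j -> inC j' -> j != j' -> cc c j j' = - l.
  move=> j j' jC j'C jj; have [_ [_ [_ [h4 _]]]] := Hr _ _ jC j'C jj.
  have := F1 _ jC; lra.
have F4 : forall j, inC j -> cc c i2 j = l.
  move=> j jC; have [p /andP [pC pj]] := otherC j.
  have [_ [_ [_ [_ [_ [_ h7]]]]]] := Hr _ _ pC jC pj.
  have := F1 _ jC; have := F5 _ jC; lra.
have [p /andP [pC pk0]] := otherC k0.
have F6 : cc c i1 i2 = 0.
  have [_ [_ [h2 _]]] := Hr _ _ pC k0C pk0.
  have := F5 _ k0C; lra.
have F7 : cc c i2 i1 = - l.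
  have [_ [_ [_ [_ [_ [h6 _]]]]]] := Hr _ _ pC k0C pk0.
  have := F5 _ k0C; have := F4 _ k0C; lra.
have Hc : forall a, c a = l * pi a.
  move=> a; rewrite -cc_arc -[pi a]cc_arc.
  move: (valP a) => /=; case: (val a) => x y /= xy.
  case: (eqVneq x i1) => [?|x1]; first subst x.
    case: (eqVneq y i2) => [?|y2]; first by subst y; rewrite F6 ccpi_12 // mulr0.
    have yC : inC y by apply/andP; split => //; rewrite eq_sym.
    by rewrite F2 // ccpi_1j // mulr1.
  case: (eqVneq x i2) => [?|x2]; first subst x.
    case: (eqVneq y i1) => [?|y1]; first by subst y; rewrite F7 ccpi_21 // mulrN1.
    have yC : inC y by apply/andP; split => //; rewrite eq_sym.
    by rewrite F4 // ccpi_2j // mulr1.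
  have xC : inC x by apply/andP.
  case: (eqVneq y i1) => [?|y1]; first by subst y; rewrite F1 // ccpi_j1 // mulr1.
  case: (eqVneq y i2) => [?|y2]; first by subst y; rewrite F5 // ccpi_j2 // mulr0.
  have yC : inC y by apply/andP.
  by rewrite F3 // ccpi_jk // mulrN1.
exists l; split => //.
have k0p : k0 != p by rewrite eq_sym.
have tB : lin pi (charvec R (O i1 i2 k0 p 3 2 1 0)) = pi0 by apply: base_tight.
have hB : lin c (charvec R (O i1 i2 k0 p 3 2 1 0)) + c0 = 0.
  by apply: H; rewrite /Pface O_weak tB eqxx.
rewrite (lin_scale _ Hc) tB in hB; lra.
Qed.

Lemma full_kernel (c : vec R n) c0 : (forall W, wob W -> lin c (charvec R W) + c0 = 0) ->
  (forall a, c a = 0) /\ c0 = 0.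
Proof.
move=> H.
have L : forall S h, lin c (charvec R (Wsc S h)) = - c0.
  move=> S h; apply/eqP; rewrite -addr_eq0; apply/eqP; apply: H; apply/wobP; exact: weak_sc.
have Hc : forall a, c a = 0.
  move=> a; rewrite -cc_arc; move: (valP a) => /=; case: (val a) => x y /= xy.
  have uS : uniq [:: x; y] by rewrite /= inE xy.
  have := diff_sc c (fun _ => 0%N) (fun z => if z == y then 1%N else 0%N) uS.
  rewrite !L subrr !big_cons !big_nil !cc_diag eqxx (negbTE xy) /b01 /=.
  move=> h; lra.
split => //.
have := L [::] (fun _ => 0%N); rewrite /lin big1 => [|a _]; last by rewrite Hc mul0r.
move=> h; lra.
Qed.

Lemma valid_PWO x : in_PWO x -> lin pi x <= pi0.
Proof.
case=> lam [l0 [lnw [ls lx]]].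
have -> : lin pi x = \sum_W lam W * lin pi (charvec R W).
  rewrite /lin (eq_bigr (fun a => \sum_W pi a * (lam W * charvec R W a))); last first.
    by move=> a _; rewrite lx mulr_sumr.
  rewrite exchange_big /=; apply: eq_bigr => W _; rewrite mulr_sumr.
  by apply: eq_bigr => a _; rewrite mulrCA.
rewrite -[X in _ <= X]mul1r -ls mulr_suml; apply: ler_sum => W _.
case: (boolP (wob W)) => [/wobP [_ [tr tot]] | nw].
  by apply: (ler_wpM2l (l0 W)); apply: valid.
by rewrite lnw ?mul0r // => /wobP; rewrite (negbTE nw).
Qed.

End Final.

Unset Implicit Arguments.

Theorem mainTheorem10 (R : realFieldType) (n : nat) (i1 i2 : 'I_n) :
  (4 <= n)%N -> i1 != i2 ->
  is_facet (@in_PWO R n) (pi_ineq R i1 i2) (pi0_ineq R n).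
Proof.
move=> n4 n12.
have [k0 /andP [k0C _]] := otherC n4 n12 i1.
have [p /andP [pC pk0]] := otherC n4 n12 k0.
have k0p : k0 != p by rewrite eq_sym.
have tB : lin (pi_ineq R i1 i2) (charvec R (O i1 i2 k0 p 3 2 1 0)) = pi0_ineq R n.
  exact: base_tight.
split; [|split; [|split]].
- move=> x; exact: valid_PWO.
- exists (charvec R (O i1 i2 k0 p 3 2 1 0)); split => //.
  apply: PWO_weak; exact: weak_sc.
- exists (charvec R (O i1 i2 k0 p 3 3 1 0)); split.
    apply: PWO_weak; exact: weak_sc.
  have := diffO n12 k0C pC k0p (pi_ineq R i1 i2) 3 3 1 0 3 2 1 0.
  rewrite /dd /b01 /=.
  rewrite ccpi_12 ?ccpi_21 ?(ccpi_1j n12 k0C) ?(ccpi_1j n12 pC) ?(ccpi_j1 n12 k0C) ?(ccpi_j1 n12 pC)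
    ?(ccpi_2j n12 k0C) ?(ccpi_2j n12 pC) ?(ccpi_j2 n12 k0C) ?(ccpi_j2 n12 pC)
    ?(ccpi_jk n12 k0C pC k0p) ?(ccpi_jk n12 pC k0C pk0) // => h.
  apply/eqP => E; move: h; rewrite E tB; lra.
- exists #|{: arc n}|; split.
  + split.
      have [q [Pq Iq]] := full_dim_gen (fun c c0 => @full_kernel R n c c0).
      exists (fun k => charvec R (q k)); split => // k.
      by apply: PWO_weak; apply/wobP.
    move=> q _; exact: no_big_indep.
  + have [q [Pq Iq]] := face_dim_gen (fun c c0 => @face_kernel R n i1 i2 n4 n12 c c0).
    exists (fun k => charvec R (q k)); split => // k.
    move: (Pq k) => /andP [/wobP w /eqP e]; split => //.
    exact: PWO_weak.
Qed.
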